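(* Let $H$ be a real Hilbert space, $T\subset H\times H$ a closed convex cone, $T(h):=\{z\in H:(h,z)\in T\}$ and $N:=T^\circ$. Consider: (i) there exists $\beta>0$ such that $\langle h,z\rangle\le-\beta$ for all $(h,z)\in N$ with $\|z\|=1$; (ii) there exists $\beta_1>0$ such that for each $h\in S_H\cap\operatorname{sqri}(\operatorname{Proj}_hT)$ there exists $z$ with $(h,z)\in T$ and $\langle h,z\rangle\ge\beta_1$. Then (i) implies (ii). If moreover $\operatorname{qri}N\neq\emptyset$ and $\operatorname{qri}(\operatorname{Proj}_zN)\subset\operatorname{sqri}(\operatorname{Proj}_hT)$, then (ii) implies (i).
   Context: $S_H$ is the unit sphere of $H$. $T^\circ:=\{(a,b)\in H\times H:\langle a,h\rangle+\langle b,z\rangle\le0\ \forall(h,z)\in T\}$. For $S\subset H\times H$: $\operatorname{Proj}_hS:=\{h:\exists z,\ (h,z)\in S\}$, $\operatorname{Proj}_zS:=\{z:\exists h,\ (h,z)\in S\}$. For a set $A$ in a Hilbert space: $\operatorname{qri}A:=\{x\in A:\overline{\operatorname{cone}}(A-x)\text{ is a linear subspace}\}$ and $\operatorname{sqri}A:=\{x\in A:\operatorname{cone}(A-x)\text{ is a closed linear subspace}\}$, where $\operatorname{cone}(A-x)$ is the cone generated by $A-x$ and $\overline{\operatorname{cone}}$ its norm closure. *)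

(* Defs.v *)
From Stdlib Require Import Reals.
Open Scope R_scope.
Set Implicit Arguments.

Record HilbertSpace := {
  HS :> Type;
  hzero : HS;
  hadd : HS -> HS -> HS;
  hopp : HS -> HS;
  hscal : R -> HS -> HS;
  hinner : HS -> HS -> R;
  hadd_assoc : forall x y z, hadd x (hadd y z) = hadd (hadd x y) z;
  hadd_comm : forall x y, hadd x y = hadd y x;
  hadd_0 : forall x, hadd x hzero = x;
  hadd_opp : forall x, hadd x (hopp x) = hzero;
  hscal_assoc : forall a b x, hscal a (hscal b x) = hscal (a * b) x;
  hscal_1 : forall x, hscal 1 x = x;
  hscal_addv : forall a x y, hscal a (hadd x y) = hadd (hscal a x) (hscal a y);
  hscal_adds : forall a b x, hscal (a + b) x = hadd (hscal a x) (hscal b x);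
  hinner_sym : forall x y, hinner x y = hinner y x;
  hinner_addl : forall x y z, hinner (hadd x y) z = hinner x z + hinner y z;
  hinner_scall : forall a x y, hinner (hscal a x) y = a * hinner x y;
  hinner_pos : forall x, 0 <= hinner x x;
  hinner_def : forall x, hinner x x = 0 -> x = hzero;
  hcomplete : forall u : nat -> HS,
    (forall eps, 0 < eps -> exists N, forall m n, (N <= m)%nat -> (N <= n)%nat ->
        sqrt (hinner (hadd (u m) (hopp (u n))) (hadd (u m) (hopp (u n)))) < eps) ->
    exists l, forall eps, 0 < eps -> exists N, forall n, (N <= n)%nat ->
        sqrt (hinner (hadd (u n) (hopp l)) (hadd (u n) (hopp l))) < eps
}.

Definition hnorm (H : HilbertSpace) (x : H) : R := sqrt (hinner H x x).

(** Normed vector space operations, used to state qri / sqri generically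
    (on H and on H x H). *)
Record NOps := {
  V :> Type;
  vzero : V;
  vadd : V -> V -> V;
  vopp : V -> V;
  vscal : R -> V -> V;
  vnorm : V -> R
}.

Definition HOps (H : HilbertSpace) : NOps :=
  {| V := HS H; vzero := hzero H; vadd := hadd H; vopp := hopp H;
     vscal := hscal H; vnorm := hnorm H |}.

Definition PairOps (H : HilbertSpace) : NOps :=
  {| V := (HS H * HS H)%type;
     vzero := (hzero H, hzero H);
     vadd := fun p q => (hadd H (fst p) (fst q), hadd H (snd p) (snd q));
     vopp := fun p => (hopp H (fst p), hopp H (snd p));
     vscal := fun t p => (hscal H t (fst p), hscal H t (snd p));
     vnorm := fun p => sqrt (hinner H (fst p) (fst p) + hinner H (snd p) (snd p)) |}.

Section Gen.
Variable E : NOps.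
Definition vsub (x y : E) : E := vadd E x (vopp E y).

Definition is_closed (A : E -> Prop) : Prop :=
  forall x, ~ A x -> exists eps, 0 < eps /\ forall y, A y -> eps <= vnorm E (vsub x y).

Definition closure (A : E -> Prop) : E -> Prop :=
  fun x => forall eps, 0 < eps -> exists y, A y /\ vnorm E (vsub x y) < eps.

Definition is_convex (A : E -> Prop) : Prop :=
  forall x y t, A x -> A y -> 0 <= t <= 1 ->
    A (vadd E (vscal E t x) (vscal E (1 - t) y)).

Definition is_cone (A : E -> Prop) : Prop :=
  forall t x, 0 <= t -> A x -> A (vscal E t x).

Definition is_linear_subspace (A : E -> Prop) : Prop :=
  A (vzero E) /\ (forall x y, A x -> A y -> A (vadd E x y)) /\
  (forall t x, A x -> A (vscal E t x)).

Definition cone_gen (A : E -> Prop) (x : E) : E -> Prop :=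
  fun v => exists t a, 0 <= t /\ A a /\ v = vscal E t (vsub a x).

Definition qri (A : E -> Prop) : E -> Prop :=
  fun x => A x /\ is_linear_subspace (closure (cone_gen A x)).

Definition sqri (A : E -> Prop) : E -> Prop :=
  fun x => A x /\ is_linear_subspace (cone_gen A x) /\ is_closed (cone_gen A x).
End Gen.

Definition polar (H : HilbertSpace) (T : H * H -> Prop) : H * H -> Prop :=
  fun p => forall h z, T (h, z) -> hinner H (fst p) h + hinner H (snd p) z <= 0.

Definition Proj_h (H : HilbertSpace) (S : H * H -> Prop) : H -> Prop :=
  fun h => exists z, S (h, z).
Definition Proj_z (H : HilbertSpace) (S : H * H -> Prop) : H -> Prop :=
  fun z => exists h, S (h, z).

Definition unit_sphere (H : HilbertSpace) : H -> Prop := fun h => hnorm H h = 1.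

(* Main.v *)
Require Import Defs.
From Stdlib Require Import Reals Lra Psatz Classical ClassicalEpsilon.
Open Scope R_scope.


Section Basic.
Variable X : HilbertSpace.

Lemma hinner_zerol e : hinner X (hzero X) e = 0.
Proof.
  pose proof (hinner_addl X (hzero X) (hzero X) e) as E.
  rewrite hadd_0 in E. lra.
Qed.

Lemma hinner_oppl x e : hinner X (hopp X x) e = - hinner X x e.
Proof.
  pose proof (hinner_addl X x (hopp X x) e) as E.
  rewrite hadd_opp, hinner_zerol in E. lra.
Qed.

Lemma hinner_addr x y z : hinner X z (hadd X x y) = hinner X z x + hinner X z y.
Proof. rewrite !(hinner_sym X z). apply hinner_addl. Qed.

Lemma hinner_scalr a x y : hinner X y (hscal X a x) = a * hinner X y x.
Proof. rewrite !(hinner_sym X y). apply hinner_scall. Qed.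

Lemma hinner_oppr x e : hinner X e (hopp X x) = - hinner X e x.
Proof. rewrite !(hinner_sym X e). apply hinner_oppl. Qed.

Lemma hinner_zeror e : hinner X e (hzero X) = 0.
Proof. rewrite hinner_sym. apply hinner_zerol. Qed.

Lemma vec_ext x y : (forall e, hinner X x e = hinner X y e) -> x = y.
Proof.
  intro He.
  assert (D : hadd X x (hopp X y) = hzero X).
  { apply hinner_def. rewrite hinner_addl, hinner_oppl, !He. ring. }
  assert (Hy : hadd X (hopp X y) y = hzero X) by (rewrite hadd_comm; apply hadd_opp).
  rewrite <- (hadd_0 X x), <- Hy, hadd_assoc, D, hadd_comm, hadd_0. reflexivity.
Qed.
End Basic.

Ltac iexp := repeat (rewrite ?hinner_addl, ?hinner_scall, ?hinner_oppl, ?hinner_zerol,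
   ?hinner_addr, ?hinner_scalr, ?hinner_oppr, ?hinner_zeror).
Ltac iexp_in H := repeat (rewrite ?hinner_addl, ?hinner_scall, ?hinner_oppl, ?hinner_zerol,
   ?hinner_addr, ?hinner_scalr, ?hinner_oppr, ?hinner_zeror in H).
Ltac veq := apply vec_ext; let e := fresh "e" in intro e; iexp.

Section Norm.
Variable X : HilbertSpace.
Notation nrm := (hnorm X).
Notation ip := (hinner X).

Lemma nrm_pos x : 0 <= nrm x.
Proof. apply sqrt_pos. Qed.

Lemma nrm_sq x : nrm x * nrm x = ip x x.
Proof. apply sqrt_sqrt, hinner_pos. Qed.

Lemma sq_uniq u v : 0 <= u -> 0 <= v -> u * u = v * v -> u = v.
Proof. intros. nra. Qed.

Lemma sq_le u v : 0 <= v -> u * u <= v * v -> u <= v.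
Proof. intros. nra. Qed.

Lemma CS_sq x y : ip x y * ip x y <= ip x x * ip y y.
Proof.
  set (a := ip x x); set (b := ip x y); set (c := ip y y).
  assert (Q : forall t, 0 <= a + 2 * t * b + t * t * c).
  { intro t. pose proof (hinner_pos X (hadd X x (hscal X t y))) as P.
    iexp_in P. rewrite (hinner_sym X y x) in P. unfold a, b, c. lra. }
  assert (c0 : 0 <= c) by apply hinner_pos.
  assert (a0 : 0 <= a) by apply hinner_pos.
  destruct (Req_dec c 0) as [Hc|Hc].
  - destruct (Req_dec b 0) as [Hb|Hb].
    + rewrite Hb, Hc. lra.
    + specialize (Q (-(a+1)/(2*b))). rewrite Hc in Q.
      replace (a + 2 * (- (a + 1) / (2 * b)) * b + - (a + 1) / (2 * b) * (- (a + 1) / (2 * b)) * 0) with (-1) in Q by (field; auto). lra.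
  - specialize (Q (-b/c)).
    assert (c > 0) by lra.
    assert (E : a + 2 * (- b / c) * b + - b / c * (- b / c) * c = (a*c - b*b)/c) by (field; auto).
    rewrite E in Q.
    assert (0 <= a * c - b * b).
    { apply Rmult_le_reg_r with (/c). apply Rinv_0_lt_compat; lra.
      rewrite Rmult_0_l. exact Q. }
    lra.
Qed.

Lemma CS x y : ip x y <= nrm x * nrm y.
Proof.
  apply sq_le. apply Rmult_le_pos; apply nrm_pos.
  replace (nrm x * nrm y * (nrm x * nrm y)) with ((nrm x * nrm x) * (nrm y * nrm y)) by ring.
  rewrite !nrm_sq. apply CS_sq.
Qed.

Lemma CS_abs x y : Rabs (ip x y) <= nrm x * nrm y.
Proof.
  apply sq_le. apply Rmult_le_pos; apply nrm_pos.
  rewrite <- Rabs_mult, Rabs_right by (apply Rle_ge, Rle_0_sqr).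
  replace (nrm x * nrm y * (nrm x * nrm y)) with ((nrm x * nrm x) * (nrm y * nrm y)) by ring.
  rewrite !nrm_sq. apply CS_sq.
Qed.

Lemma nrm_add x y : nrm (hadd X x y) <= nrm x + nrm y.
Proof.
  apply sq_le. pose proof (nrm_pos x); pose proof (nrm_pos y); lra.
  rewrite nrm_sq. iexp. rewrite (hinner_sym X y x).
  pose proof (CS x y). rewrite <- (nrm_sq x), <- (nrm_sq y) . nra.
Qed.

Lemma nrm_scal t x : nrm (hscal X t x) = Rabs t * nrm x.
Proof.
  apply sq_uniq. apply nrm_pos. apply Rmult_le_pos. apply Rabs_pos. apply nrm_pos.
  rewrite nrm_sq. iexp.
  replace (Rabs t * nrm x * (Rabs t * nrm x)) with ((Rabs t * Rabs t) * (nrm x * nrm x)) by ring.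
  rewrite <- Rabs_mult, Rabs_right by (apply Rle_ge, Rle_0_sqr). rewrite nrm_sq. ring.
Qed.

Lemma nrm_opp x : nrm (hopp X x) = nrm x.
Proof. unfold hnorm. iexp. f_equal. ring. Qed.

Lemma nrm_zero : nrm (hzero X) = 0.
Proof. unfold hnorm. rewrite hinner_zerol. apply sqrt_0. Qed.

Definition hsub (x y : X) := hadd X x (hopp X y).

Lemma nrm_sub_sym x y : nrm (hsub x y) = nrm (hsub y x).
Proof. unfold hnorm, hsub. f_equal. iexp. ring. Qed.

Lemma nrm_tri x y z : nrm (hsub x z) <= nrm (hsub x y) + nrm (hsub y z).
Proof.
  replace (hsub x z) with (hadd X (hsub x y) (hsub y z)). apply nrm_add.
  unfold hsub; veq; ring.
Qed.

Lemma nrm_eq0 x : nrm x = 0 -> x = hzero X.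
Proof. intro E. apply hinner_def. rewrite <- nrm_sq, E. ring. Qed.

Lemma nrm_scal_pos t x : 0 <= t -> nrm (hscal X t x) = t * nrm x.
Proof. intro. rewrite nrm_scal, Rabs_right; lra. Qed.
End Norm.


Lemma sqrt_sum_le a b : 0 <= a -> 0 <= b -> sqrt (a + b) <= sqrt a + sqrt b.
Proof.
  intros. apply sq_le. pose proof (sqrt_pos a); pose proof (sqrt_pos b); lra.
  rewrite sqrt_sqrt by lra.
  replace ((sqrt a + sqrt b) * (sqrt a + sqrt b)) with (sqrt a * sqrt a + sqrt b * sqrt b + 2 * sqrt a * sqrt b) by ring.
  rewrite !sqrt_sqrt by lra. pose proof (sqrt_pos a); pose proof (sqrt_pos b). nra.
Qed.

Lemma sqrt_le_sum a b : 0 <= a -> 0 <= b -> sqrt a <= sqrt (a + b).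
Proof. intros. apply sqrt_le_1_alt. lra. Qed.

Section Pair.
Variable H : HilbertSpace.

Definition HPair : HilbertSpace.
Proof.
  refine {| HS := (HS H * HS H)%type; hzero := (hzero H, hzero H);
  hadd := fun p q => (hadd H (fst p) (fst q), hadd H (snd p) (snd q));
  hopp := fun p => (hopp H (fst p), hopp H (snd p));
  hscal := fun t p => (hscal H t (fst p), hscal H t (snd p));
  hinner := fun p q => hinner H (fst p) (fst q) + hinner H (snd p) (snd q) |}.
  - intros; simpl; rewrite !hadd_assoc; reflexivity.
  - intros; simpl; rewrite (hadd_comm H (fst x)), (hadd_comm H (snd x)); reflexivity.
  - intros [a b]; simpl; rewrite !hadd_0; reflexivity.
  - intros [a b]; simpl; rewrite !hadd_opp; reflexivity.
  - intros; simpl; rewrite !hscal_assoc; reflexivity.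
  - intros [a b]; simpl; rewrite !hscal_1; reflexivity.
  - intros; simpl; rewrite !hscal_addv; reflexivity.
  - intros; simpl; rewrite !hscal_adds; reflexivity.
  - intros; simpl; rewrite (hinner_sym H (fst x)), (hinner_sym H (snd x)); reflexivity.
  - intros; simpl; rewrite !hinner_addl; ring.
  - intros; simpl; rewrite !hinner_scall; ring.
  - intros; simpl. pose proof (hinner_pos H (fst x)); pose proof (hinner_pos H (snd x)); lra.
  - intros [a b] E; simpl in E. pose proof (hinner_pos H a); pose proof (hinner_pos H b).
    f_equal; apply hinner_def; lra.
  - intros u Hu.
    assert (C1 : forall eps, 0 < eps -> exists N, forall m n, (N <= m)%nat -> (N <= n)%nat ->
        sqrt (hinner H (hadd H (fst (u m)) (hopp H (fst (u n)))) (hadd H (fst (u m)) (hopp H (fst (u n))))) < eps).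
    { intros eps He; destruct (Hu eps He) as [N HN]; exists N; intros m n Hm Hn.
      specialize (HN m n Hm Hn); simpl in HN.
      eapply Rle_lt_trans; [|exact HN]. apply sqrt_le_sum; apply hinner_pos. }
    assert (C2 : forall eps, 0 < eps -> exists N, forall m n, (N <= m)%nat -> (N <= n)%nat ->
        sqrt (hinner H (hadd H (snd (u m)) (hopp H (snd (u n)))) (hadd H (snd (u m)) (hopp H (snd (u n))))) < eps).
    { intros eps He; destruct (Hu eps He) as [N HN]; exists N; intros m n Hm Hn.
      specialize (HN m n Hm Hn); simpl in HN.
      eapply Rle_lt_trans; [|exact HN]. rewrite Rplus_comm. apply sqrt_le_sum; apply hinner_pos. }
    destruct (hcomplete H _ C1) as [l1 L1]. destruct (hcomplete H _ C2) as [l2 L2].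
    exists (l1, l2). intros eps He.
    destruct (L1 (eps/2)) as [N1 HN1]; [lra|]. destruct (L2 (eps/2)) as [N2 HN2]; [lra|].
    exists (Nat.max N1 N2). intros n Hn. simpl.
    eapply Rle_lt_trans. apply sqrt_sum_le; apply hinner_pos.
    specialize (HN1 n ltac:(lia)). specialize (HN2 n ltac:(lia)). lra.
Defined.

Lemma PairOps_HPair : PairOps H = HOps HPair.
Proof. reflexivity. Qed.

Lemma pair_nrm_le a b : hnorm HPair (a, b) <= hnorm H a + hnorm H b.
Proof. unfold hnorm; simpl. apply sqrt_sum_le; apply hinner_pos. Qed.
Lemma pair_nrm_fst a b : hnorm H a <= hnorm HPair (a, b).
Proof. unfold hnorm; simpl. apply sqrt_le_sum; apply hinner_pos. Qed.
Lemma pair_nrm_snd a b : hnorm H b <= hnorm HPair (a, b).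
Proof. unfold hnorm; simpl. rewrite Rplus_comm. apply sqrt_le_sum; apply hinner_pos. Qed.
End Pair.

Lemma seq_build (A : Type) (P : nat -> A -> Prop) (R : nat -> A -> A -> Prop) :
  (exists a0, P 0%nat a0) ->
  (forall n a, P n a -> exists b, P (S n) b /\ R n a b) ->
  exists f : nat -> A, forall n, P n (f n) /\ R n (f n) (f (S n)).
Proof.
  intros [a0 H0] Hs.
  assert (G : forall n a, {b | P n a -> P (S n) b /\ R n a b}).
  { intros n a. apply constructive_indefinite_description.
    destruct (classic (P n a)) as [Hp|Hp].
    - destruct (Hs n a Hp) as [b Hb]. exists b; auto.
    - exists a0; tauto. }
  pose (f := fix f n := match n with O => a0 | S k => proj1_sig (G k (f k)) end).
  exists f.
  assert (Pf : forall n, P n (f n)).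
  { induction n; simpl. exact H0. apply (proj2_sig (G n (f n)) IHn). }
  intro n. split. apply Pf. apply (proj2_sig (G n (f n)) (Pf n)).
Qed.

Lemma half_pow_small eps : 0 < eps -> exists N, (/2)^N < eps.
Proof.
  intro. destruct (pow_lt_1_zero (/2)) with eps as [N HN]; auto.
  rewrite Rabs_right; lra.
  exists N. specialize (HN N (le_n _)). rewrite Rabs_right in HN; auto.
  apply Rle_ge, pow_le; lra.
Qed.

Lemma half_pow_pos n : 0 < (/2)^n.
Proof. apply pow_lt; lra. Qed.
Lemma half_pow_S n : (/2)^(S n) = (/2)^n / 2.
Proof. simpl; field. Qed.
Lemma half_pow_le1 n : (/2)^n <= 1.
Proof. induction n; simpl. lra. pose proof (half_pow_pos n). lra. Qed.
Lemma half_pow_mono k j : (k <= j)%nat -> (/2)^j <= (/2)^k.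
Proof. induction 1. lra. rewrite half_pow_S. pose proof (half_pow_pos m). lra. Qed.


Section Lim.
Variable X : HilbertSpace.
Notation nrm := (hnorm X).

Lemma cauchy_limit (c : nat -> X) (b : nat -> R) (K : R) :
  0 <= K -> (forall k, b k <= K * (/2)^k) ->
  (forall k j, (k <= j)%nat -> nrm (hsub X (c j) (c k)) <= b k) ->
  exists l, forall k, nrm (hsub X (c k) l) <= b k.
Proof.
  intros K0 Hb Hc.
  assert (Cau : forall eps, 0 < eps -> exists N, forall m n, (N <= m)%nat -> (N <= n)%nat ->
        sqrt (hinner X (hadd X (c m) (hopp X (c n))) (hadd X (c m) (hopp X (c n)))) < eps).
  { intros eps He. destruct (half_pow_small (eps / (2 * (K+1)))) as [N HN].
    apply Rdiv_lt_0_compat; lra.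
    exists N. intros m n Hm Hn. change (nrm (hsub X (c m) (c n)) < eps).
    eapply Rle_lt_trans. apply (nrm_tri X _ (c N)).
    rewrite (nrm_sub_sym X (c N)).
    pose proof (Hc N m Hm); pose proof (Hc N n Hn). pose proof (Hb N).
    pose proof (half_pow_pos N).
    assert (K * (/2)^N <= (K+1) * (/2)^N) by nra.
    assert ((K+1) * (/2)^N < eps / 2).
    { apply Rmult_lt_reg_l with (/(K+1)). apply Rinv_0_lt_compat; lra.
      rewrite <- Rmult_assoc, Rinv_l, Rmult_1_l by lra.
      replace (/ (K + 1) * (eps / 2)) with (eps / (2 * (K+1))) by (field; lra). exact HN. }
    lra. }
  destruct (hcomplete X c Cau) as [l Hl]. exists l. intro k.
  apply Rnot_lt_le. intro Hlt.
  destruct (Hl (nrm (hsub X (c k) l) - b k)) as [N HN]; [lra|].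
  specialize (HN (Nat.max N k) ltac:(lia)). change (nrm (hsub X (c (Nat.max N k)) l) < nrm (hsub X (c k) l) - b k) in HN.
  pose proof (nrm_tri X (c k) (c (Nat.max N k)) l).
  pose proof (Hc k (Nat.max N k) ltac:(lia)). rewrite nrm_sub_sym in H0. lra.
Qed.

Lemma closed_limit (L : X -> Prop) (c : nat -> X) l :
  is_closed (HOps X) L -> (forall k, L (c k)) ->
  (forall eps, 0 < eps -> exists k, nrm (hsub X (c k) l) < eps) -> L l.
Proof.
  intros Cl Hc Hl. apply NNPP. intro N. destruct (Cl l N) as [eps [He Hy]].
  destruct (Hl eps He) as [k Hk]. specialize (Hy (c k) (Hc k)).
  change (eps <= nrm (hsub X l (c k))) in Hy. rewrite nrm_sub_sym in Hy. lra.
Qed.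

Lemma baire (L : X -> Prop) (G : nat -> X -> Prop) :
  is_closed (HOps X) L -> L (hzero X) ->
  (forall n v, ~ G n v -> exists d, 0 < d /\ forall v', nrm (hsub X v v') < d -> ~ G n v') ->
  (forall v, L v -> exists n, G n v) ->
  exists n c rho, L c /\ 0 < rho /\ forall v, L v -> nrm (hsub X v c) < rho -> G n v.
Proof.
  intros Cl L0 Op Cov. apply NNPP. intro Hno.
  assert (Hs : forall n c rho, L c -> 0 < rho -> exists v, L v /\ nrm (hsub X v c) < rho /\ ~ G n v).
  { intros n c rho Lc Hr. apply NNPP. intro Hn. apply Hno. exists n, c, rho.
    split; [auto|split; [auto|]]. intros v Lv Hv. apply NNPP. intro Gv. apply Hn. exists v. auto. }
  destruct (seq_build (X * R)
    (fun k p => L (fst p) /\ 0 < snd p /\ snd p <= (/2)^k)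
    (fun k p p' => nrm (hsub X (fst p') (fst p)) < snd p / 2 /\ snd p' <= snd p / 2 /\
        forall v', nrm (hsub X (fst p') v') <= snd p' -> ~ G k v')) as [f Hf].
  { exists (hzero X, 1). simpl. split; [auto|lra]. }
  { intros n [c rho] [Lc [Hr Hr2]]. simpl in *.
    destruct (Hs n c (rho/2) Lc ltac:(lra)) as [v [Lv [Hv Gv]]].
    destruct (Op n v Gv) as [d [Hd Hdd]].
    exists (v, Rmin d rho / 2). simpl.
    assert (0 < Rmin d rho) by (apply Rmin_pos; lra).
    pose proof (Rmin_l d rho); pose proof (Rmin_r d rho).
    split. split; auto. split. lra. pose proof (half_pow_S n) as HS. simpl in HS |- *. lra.
    split. auto. split. lra. intros v' Hv'. apply Hdd. lra. }
  set (c := fun k => fst (f k)). set (r := fun k => snd (f k)).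
  assert (Hmono : forall k j, (k <= j)%nat -> nrm (hsub X (c j) (c k)) <= r k - r j).
  { intros k j Hkj. induction Hkj.
    - unfold hsub. replace (hadd X (c k) (hopp X (c k))) with (hzero X) by (veq; ring).
      rewrite nrm_zero. lra.
    - eapply Rle_trans. apply (nrm_tri X _ (c m)).
      destruct (Hf m) as [_ [H1 [H2 _]]]. unfold c, r in *. lra. }
  destruct (cauchy_limit c r 1) as [l Hl].
  lra. intro k. destruct (Hf k) as [[_ [_ Hq]] _]. unfold c, r in *. lra.
  intros k j Hkj. pose proof (Hmono k j Hkj). destruct (Hf j) as [[_ [Hq _]] _]. unfold c, r in *. lra.
  assert (Ll : L l).
  { apply (closed_limit L c l Cl). intro k. apply (Hf k).
    intros eps He. destruct (half_pow_small eps He) as [N HN]. exists N.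
    pose proof (Hl N). destruct (Hf N) as [[_ [_ Hq]] _]. unfold c, r in *. lra. }
  destruct (Cov l Ll) as [n Gn].
  destruct (Hf n) as [_ [_ [_ Hb]]]. apply (Hb l); auto. apply (Hl (S n)).
Qed.
End Lim.


Section TT.
Variable H : HilbertSpace.
Variable T : H * H -> Prop.
Hypothesis T_closed : is_closed (PairOps H) T.
Hypothesis T_convex : is_convex (PairOps H) T.
Hypothesis T_cone : is_cone (PairOps H) T.
Notation nrm := (hnorm H).

Lemma T_comb a b x1 z1 x2 z2 : 0 <= a -> 0 <= b -> a + b = 1 -> T (x1, z1) -> T (x2, z2) ->
  T (hadd H (hscal H a x1) (hscal H b x2), hadd H (hscal H a z1) (hscal H b z2)).
Proof.
  intros. replace b with (1 - a) by lra. apply (T_convex (x1, z1) (x2, z2) a); auto. lra.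
Qed.

Lemma T_scal t x z : 0 <= t -> T (x, z) -> T (hscal H t x, hscal H t z).
Proof. intros. apply (T_cone t (x, z)); auto. Qed.

Lemma T_add x1 z1 x2 z2 : T (x1, z1) -> T (x2, z2) -> T (hadd H x1 x2, hadd H z1 z2).
Proof.
  intros. pose proof (T_comb (/2) (/2) x1 z1 x2 z2 ltac:(lra) ltac:(lra) ltac:(lra) H0 H1) as C.
  apply (T_scal 2) in C; [|lra].
  replace (hadd H x1 x2) with (hscal H 2 (hadd H (hscal H (/ 2) x1) (hscal H (/ 2) x2))) by (veq; field).
  replace (hadd H z1 z2) with (hscal H 2 (hadd H (hscal H (/ 2) z1) (hscal H (/ 2) z2))) by (veq; field).
  exact C.
Qed.

Lemma T_zero : (exists p, T p) -> T (hzero H, hzero H).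
Proof.
  intros [[x z] Hp]. apply (T_scal 0) in Hp; [|lra].
  replace (hzero H) with (hscal H 0 x) at 1 by (veq; ring).
  replace (hzero H) with (hscal H 0 z) by (veq; ring). exact Hp.
Qed.

Lemma T_lim x y : (forall eps, 0 < eps -> exists w z, T (w, z) /\ nrm (hsub H x w) + nrm (hsub H y z) < eps) -> T (x, y).
Proof.
  intros Hl. apply NNPP. intro N. destruct (T_closed (x, y) N) as [eps [He Hy]].
  destruct (Hl eps He) as [w [z [Tw Hw]]]. specialize (Hy (w, z) Tw).
  change (eps <= hnorm (HPair H) (hsub H x w, hsub H y z)) in Hy.
  pose proof (pair_nrm_le H (hsub H x w) (hsub H y z)). lra.
Qed.

Lemma ru_iter (L : H -> Prop) h r m :
  0 < r -> 0 <= m -> (forall w z, T (w, z) -> L w) -> L h ->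
  (forall a b, L a -> L b -> L (hadd H a b)) -> (forall t a, L a -> L (hscal H t a)) ->
  (forall u, L u -> nrm u < r -> forall eps, 0 < eps -> exists w z, T (w, z) /\ nrm z <= m /\
       nrm (hsub H (hadd H h u) w) < eps) ->
  forall u, L u -> nrm u < r / 2 -> exists z, T (hadd H h u, z) /\ nrm z <= m + 1.
Proof.
  intros Hr Hm DL Lh Ladd Lscal Hst u Lu Hu.
  set (y := hadd H h u).
  assert (Ly : L y) by (apply Ladd; auto).
  destruct (seq_build (H * H)
    (fun k p => T p /\ nrm (snd p) <= m /\ nrm (hsub H y (fst p)) < (/2)^k * r / 2)
    (fun k p p' => nrm (hsub H (snd p') (snd p)) <= 2 * m * (/2)^k)) as [f Hf].
  { destruct (Hst u Lu ltac:(lra) (r/2) ltac:(lra)) as [w [z [Tw [Hz Hw]]]].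
    exists (w, z). simpl. unfold y. split; auto. split; auto. lra. }
  { intros k [w z] [Tw [Hz Hw]]. simpl in *.
    set (lam := (/2)^k). assert (Hl0 : 0 < lam) by apply half_pow_pos.
    assert (Hl1 : lam <= 1) by apply half_pow_le1.
    set (mu := /lam - 1).
    assert (Hmu : 0 <= mu). { unfold mu. assert (1 <= / lam). { rewrite <- Rinv_1. apply Rinv_le_contravar; lra. } lra. }
    set (v := hadd H u (hscal H mu (hsub H y w))).
    assert (Lv : L v).
    { apply Ladd; auto. apply Lscal. unfold hsub. apply Ladd; auto.
      replace (hopp H w) with (hscal H (-1) w) by (veq; ring). apply Lscal. eapply DL; eauto. }
    assert (Hv : nrm v < r).
    { unfold v. eapply Rle_lt_trans. apply nrm_add. rewrite nrm_scal_pos by auto.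
      assert (mu * nrm (hsub H y w) <= /lam * nrm (hsub H y w)).
      { apply Rmult_le_compat_r. apply nrm_pos. unfold mu; lra. }
      assert (/lam * nrm (hsub H y w) < r/2).
      { apply Rmult_lt_reg_l with lam; auto. rewrite <- Rmult_assoc, Rinv_r, Rmult_1_l by lra.
        unfold lam. lra. }
      lra. }
    destruct (Hst v Lv Hv (r/4) ltac:(lra)) as [w' [z' [Tw' [Hz' Hw']]]].
    exists (hadd H (hscal H (1 - lam) w) (hscal H lam w'), hadd H (hscal H (1 - lam) z) (hscal H lam z')).
    simpl. split; [split; [|split]|].
    - apply T_comb; auto; lra.
    - eapply Rle_trans. apply nrm_add. rewrite !nrm_scal_pos by lra. nra.
    - replace (hsub H y (hadd H (hscal H (1 - lam) w) (hscal H lam w'))) with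
        (hscal H lam (hsub H (hadd H h v) w')).
      rewrite nrm_scal_pos by lra. change ((/2)^(S k)) with (/2 * (/2)^k). fold lam. nra.
      unfold v, mu, y, hsub. veq. field. lra.
    - replace (hsub H (hadd H (hscal H (1 - lam) z) (hscal H lam z')) z) with
        (hscal H lam (hsub H z' z)) by (unfold hsub; veq; ring).
      rewrite nrm_scal_pos by lra.
      pose proof (nrm_tri H z' (hzero H) z).
      assert (E1 : hsub H z' (hzero H) = z') by (unfold hsub; veq; ring).
      assert (E2 : hsub H (hzero H) z = hopp H z) by (unfold hsub; veq; ring).
      rewrite E1, E2, nrm_opp in H0. fold lam. nra. }
  set (zs := fun k => snd (f k)).
  assert (Hmono : forall k j, (k <= j)%nat -> nrm (hsub H (zs j) (zs k)) <= 4 * m * ((/2)^k - (/2)^j)).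
  { intros k j Hkj. induction Hkj.
    - unfold hsub. replace (hadd H (zs k) (hopp H (zs k))) with (hzero H) by (veq; ring).
      rewrite nrm_zero. lra.
    - eapply Rle_trans. apply (nrm_tri H _ (zs m0)).
      destruct (Hf m0) as [_ H1]. unfold zs in *. rewrite half_pow_S. lra. }
  destruct (cauchy_limit H zs (fun k => 4 * m * (/2)^k) (4*m)) as [zl Hzl].
  lra. intro; lra.
  intros k j Hkj. pose proof (Hmono k j Hkj). pose proof (half_pow_pos j). nra.
  exists zl. split.
  - apply T_lim. intros eps He.
    destruct (half_pow_small (eps / (2 * (4*m + r + 1)))) as [N HN].
    apply Rdiv_lt_0_compat; lra.
    exists (fst (f N)), (snd (f N)). destruct (Hf N) as [[TN [_ HwN]] _].
    split. destruct (f N); exact TN.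
    pose proof (Hzl N). unfold zs in H0. rewrite nrm_sub_sym in H0.
    pose proof (half_pow_pos N).
    assert (Hb : (4*m + r + 1) * (/2)^N < eps / 2).
    { apply Rmult_lt_reg_l with (/(4*m+r+1)). apply Rinv_0_lt_compat; lra.
      rewrite <- Rmult_assoc, Rinv_l, Rmult_1_l by lra.
      replace (/ (4*m+r+1) * (eps / 2)) with (eps / (2 * (4*m+r+1))) by (field; lra). exact HN. }
    fold y. nra.
  - destruct (half_pow_small (1 / (4*m+1))) as [N HN]. apply Rdiv_lt_0_compat; lra.
    pose proof (Hzl N). destruct (Hf N) as [[_ [HzN _]] _]. unfold zs in *.
    pose proof (nrm_tri H zl (snd (f N)) (hzero H)).
    assert (E1 : forall x, hsub H x (hzero H) = x) by (intro; unfold hsub; veq; ring).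
    rewrite !E1 in H1. rewrite nrm_sub_sym in H0.
    assert (4 * m * (/2)^N <= 1).
    { assert ((4*m+1) * (/2)^N < 1).
      { apply Rmult_lt_reg_l with (/(4*m+1)). apply Rinv_0_lt_compat; lra.
        rewrite <- Rmult_assoc, Rinv_l, Rmult_1_l by lra. rewrite Rmult_1_r.
        replace (/ (4*m+1)) with (1 / (4*m+1)) by (field; lra). exact HN. }
      pose proof (half_pow_pos N). nra. }
    lra.
Qed.
End TT.


Lemma small_t_lemma A B : 0 <= A -> (forall t, 0 < t <= 1 -> 2 * B <= t * A) -> B <= 0.
Proof.
  intros HA Ht. apply Rnot_lt_le. intro HB.
  set (t := Rmin 1 (B / (A + 1))).
  assert (0 < B / (A+1)) by (apply Rdiv_lt_0_compat; lra).
  assert (0 < t) by (apply Rmin_pos; lra).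
  assert (t <= 1) by apply Rmin_l.
  assert (t <= B / (A+1)) by apply Rmin_r.
  specialize (Ht t ltac:(lra)).
  assert (t * A <= B / (A+1) * A) by (apply Rmult_le_compat_r; lra).
  assert (B / (A+1) * A < B).
  { replace (B / (A+1) * A) with (B * (A / (A+1))) by (field; lra).
    assert (A / (A+1) < 1). { apply Rmult_lt_reg_r with (A+1). lra.
      replace (A / (A+1) * (A+1)) with A by (field; lra). lra. }
    nra. }
  lra.
Qed.

Section Sep.
Variable X : HilbertSpace.
Notation nrm := (hnorm X).
Notation ip := (hinner X).

Lemma separate (K : X -> Prop) x :
  K (hzero X) -> (forall a b, K a -> K b -> K (hadd X a b)) ->
  (forall t a, 0 <= t -> K a -> K (hscal X t a)) ->
  (exists delta, 0 < delta /\ forall k, K k -> delta <= nrm (hsub X x k)) ->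
  exists q, (forall k, K k -> ip q k <= 0) /\ 0 < ip q x.
Proof.
  intros K0 Kadd Kscal [delta [Hdel Hd]].
  set (E := fun r => exists k, K k /\ r = - nrm (hsub X x k)).
  destruct (completeness E) as [mm [Hub Hlub]].
  { exists 0. intros r [k [_ ->]]. pose proof (nrm_pos X (hsub X x k)). lra. }
  { exists (- nrm (hsub X x (hzero X))). exists (hzero X). auto. }
  set (d := - mm).
  assert (Dle : forall k, K k -> d <= nrm (hsub X x k)).
  { intros k Hk. assert (E (- nrm (hsub X x k))) by (exists k; auto). specialize (Hub _ H). unfold d. lra. }
  assert (Dinf : forall eps, 0 < eps -> exists k, K k /\ nrm (hsub X x k) < d + eps).
  { intros eps He. apply NNPP. intro Hn.
    assert (is_upper_bound E (mm - eps)).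
    { intros r [k [Hk ->]]. apply Rnot_lt_le. intro. apply Hn. exists k. split; auto. unfold d. lra. }
    specialize (Hlub _ H). lra. }
  assert (Dpos : delta <= d).
  { apply Rnot_lt_le. intro. destruct (Dinf (delta - d)) as [k [Hk Hk2]]. lra. specialize (Hd k Hk). lra. }
  destruct (seq_build X (fun n k => K k /\ nrm (hsub X x k) < d + (/2)^n * (/2)^n) (fun _ _ _ => True)) as [f Hf].
  { destruct (Dinf ((/2)^0 * (/2)^0)) as [k Hk]. simpl; lra. exists k; auto. }
  { intros n _ _. destruct (Dinf ((/2)^(S n) * (/2)^(S n))) as [k Hk].
    pose proof (half_pow_pos (S n)). nra. exists k; auto. }
  set (C := 2 * sqrt (2 * d + 1)).
  assert (Hc : forall n j, (n <= j)%nat -> nrm (hsub X (f j) (f n)) <= C * (/2)^n).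
  { intros n j Hnj. destruct (Hf n) as [[Kn Hn] _]. destruct (Hf j) as [[Kj Hj] _].
    set (a := (/2)^n). set (b := (/2)^j).
    assert (Ha : 0 < a) by apply half_pow_pos. assert (Hb : 0 < b) by apply half_pow_pos.
    assert (Hba : b <= a) by (apply half_pow_mono; auto). assert (Ha1 : a <= 1) by apply half_pow_le1.
    set (mid := hadd X (hscal X (/2) (f j)) (hscal X (/2) (f n))).
    assert (Km : K mid) by (apply Kadd; apply Kscal; auto; lra).
    pose proof (Dle _ Km) as Dm.
    assert (Par : ip (hsub X (f j) (f n)) (hsub X (f j) (f n)) =
       2 * ip (hsub X x (f j)) (hsub X x (f j)) + 2 * ip (hsub X x (f n)) (hsub X x (f n))
       - 4 * ip (hsub X x mid) (hsub X x mid)).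
    { unfold mid, hsub. iexp. lra. }
    rewrite <- !nrm_sq in Par.
    apply sq_le. unfold C. pose proof (sqrt_pos (2*d+1)). nra.
    rewrite Par.
    replace (C * a * (C * a)) with (4 * (sqrt (2*d+1) * sqrt (2*d+1)) * a * a) by (unfold C; ring).
    rewrite sqrt_sqrt by lra.
    pose proof (nrm_pos X (hsub X x (f j))). pose proof (nrm_pos X (hsub X x (f n))).
    assert (b*b <= a*a) by nra.
    assert (Hu : nrm (hsub X x (f j)) < d + a * a) by (unfold a, b in *; lra).
    assert (Hv : nrm (hsub X x (f n)) < d + a * a) by (unfold a; exact Hn).
    pose proof (nrm_pos X (hsub X x mid)).
    assert (d*d <= nrm (hsub X x mid) * nrm (hsub X x mid)) by (apply Rmult_le_compat; lra).
    assert (nrm (hsub X x (f j)) * nrm (hsub X x (f j)) <= (d + a*a) * (d + a*a)) by (apply Rmult_le_compat; lra).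
    assert (nrm (hsub X x (f n)) * nrm (hsub X x (f n)) <= (d + a*a) * (d + a*a)) by (apply Rmult_le_compat; lra).
    assert (a * a * (a * a) <= a * a * 1) by (apply Rmult_le_compat_l; nra).
    nra. }
  destruct (cauchy_limit X f (fun n => C * (/2)^n) C) as [p Hp].
  unfold C; pose proof (sqrt_pos (2*d+1)); lra. intro; lra. exact Hc.
  set (ClK := fun y => forall eps, 0 < eps -> exists k, K k /\ nrm (hsub X k y) < eps).
  assert (ClD : forall y, ClK y -> d <= nrm (hsub X x y)).
  { intros y Hy. apply Rnot_lt_le. intro. destruct (Hy (d - nrm (hsub X x y))) as [k [Hk Hk2]]. lra.
    pose proof (nrm_tri X x y k). rewrite (nrm_sub_sym X y k) in H0. specialize (Dle k Hk). lra. }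
  assert (ClComb : forall y1 y2 t, ClK y1 -> ClK y2 -> 0 <= t <= 1 ->
     ClK (hadd X (hscal X (1 - t) y1) (hscal X t y2))).
  { intros y1 y2 t H1 H2 Ht eps He. destruct (H1 (eps/2)) as [k1 [K1 N1]]; [lra|]. destruct (H2 (eps/2)) as [k2 [K2 N2]]; [lra|].
    exists (hadd X (hscal X (1 - t) k1) (hscal X t k2)). split. apply Kadd; apply Kscal; auto; lra.
    replace (hsub X (hadd X (hscal X (1 - t) k1) (hscal X t k2)) (hadd X (hscal X (1 - t) y1) (hscal X t y2)))
      with (hadd X (hscal X (1-t) (hsub X k1 y1)) (hscal X t (hsub X k2 y2))) by (unfold hsub; veq; ring).
    eapply Rle_lt_trans. apply nrm_add. rewrite !nrm_scal_pos by lra.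
    pose proof (nrm_pos X (hsub X k1 y1)). pose proof (nrm_pos X (hsub X k2 y2)).
    assert ((1-t) * nrm (hsub X k1 y1) <= nrm (hsub X k1 y1)) by nra.
    assert (t * nrm (hsub X k2 y2) <= nrm (hsub X k2 y2)) by nra. lra. }
  assert (Clp : forall s, 0 <= s -> ClK (hscal X s p)).
  { intros s Hs eps He. destruct (half_pow_small (eps / (C * (s+1) + 1))) as [N HN].
    apply Rdiv_lt_0_compat; [lra|]. unfold C; pose proof (sqrt_pos (2*d+1)); nra.
    exists (hscal X s (f N)). split. apply Kscal; auto. apply (Hf N).
    replace (hsub X (hscal X s (f N)) (hscal X s p)) with (hscal X s (hsub X (f N) p)) by (unfold hsub; veq; ring).
    rewrite nrm_scal_pos by auto. pose proof (Hp N). pose proof (half_pow_pos N).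
    assert (0 <= C) by (unfold C; pose proof (sqrt_pos (2*d+1)); lra).
    assert ((C * (s+1) + 1) * (/2)^N < eps).
    { apply Rmult_lt_reg_l with (/(C*(s+1)+1)). apply Rinv_0_lt_compat; nra.
      rewrite <- Rmult_assoc, Rinv_l, Rmult_1_l by nra.
      replace (/ (C * (s+1) + 1) * eps) with (eps / (C*(s+1)+1)) by (field; nra). exact HN. }
    assert (s * nrm (hsub X (f N) p) <= s * (C * (/2)^N)) by (apply Rmult_le_compat_l; auto).
    nra. }
  assert (Dp : nrm (hsub X x p) <= d).
  { apply Rnot_lt_le. intro Hlt. set (g := nrm (hsub X x p) - d).
    destruct (half_pow_small (g / (C + 2))) as [N HN].
    apply Rdiv_lt_0_compat. unfold g; lra. unfold C; pose proof (sqrt_pos (2*d+1)); lra.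
    pose proof (Hp N). destruct (Hf N) as [[_ HN2] _]. pose proof (nrm_tri X x (f N) p).
    pose proof (half_pow_pos N). pose proof (half_pow_le1 N).
    assert (0 <= C) by (unfold C; pose proof (sqrt_pos (2*d+1)); lra).
    assert ((C + 2) * (/2)^N < g).
    { apply Rmult_lt_reg_l with (/(C+2)). apply Rinv_0_lt_compat; lra.
      rewrite <- Rmult_assoc, Rinv_l, Rmult_1_l by lra.
      replace (/ (C+2) * g) with (g / (C+2)) by (field; lra). exact HN. }
    unfold g in *. nra. }
  assert (Dpe : nrm (hsub X x p) = d).
  { apply Rle_antisym; auto. apply ClD. replace p with (hscal X 1 p) by apply hscal_1. apply Clp; lra. }
  set (q := hsub X x p).
  assert (Var : forall y, ClK y -> ip q (hsub X y p) <= 0).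
  { intros y Hy. apply (small_t_lemma (ip (hsub X y p) (hsub X y p))). apply hinner_pos.
    intros t Ht. assert (Cp : ClK p) by (pose proof (Clp 1 ltac:(lra)) as Q; rewrite hscal_1 in Q; exact Q).
    assert (Cl := ClComb p y t Cp Hy ltac:(lra)).
    pose proof (ClD _ Cl) as Dd.
    assert (d * d <= ip (hsub X x (hadd X (hscal X (1 - t) p) (hscal X t y))) (hsub X x (hadd X (hscal X (1 - t) p) (hscal X t y)))).
    { rewrite <- nrm_sq. pose proof (nrm_pos X (hsub X x (hadd X (hscal X (1 - t) p) (hscal X t y)))). nra. }
    assert (Eq : ip (hsub X x (hadd X (hscal X (1 - t) p) (hscal X t y))) (hsub X x (hadd X (hscal X (1 - t) p) (hscal X t y)))
       = ip q q - 2 * t * ip q (hsub X y p) + t * t * ip (hsub X y p) (hsub X y p)).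
    { unfold q, hsub. iexp. rewrite (hinner_sym X y x), (hinner_sym X p x), (hinner_sym X y p). ring. }
    assert (Eq2 : ip q q = d * d) by (rewrite <- nrm_sq; unfold q; rewrite Dpe; ring).
    rewrite Eq, Eq2 in H.
    assert (0 <= t * (t * ip (hsub X y p) (hsub X y p) - 2 * ip q (hsub X y p))) by nra.
    assert (0 <= t * ip (hsub X y p) (hsub X y p) - 2 * ip q (hsub X y p)).
    { apply Rmult_le_reg_l with t. lra. lra. }
    lra. }
  exists q. split.
  - intros k Hk.
    assert (Ck : ClK k) by (intros eps He; exists k; split; auto; unfold hsub; rewrite hadd_opp, nrm_zero; lra).
    pose proof (Var k Ck). pose proof (Var _ (Clp 2 ltac:(lra))).
    unfold hsub in *. iexp_in H. iexp_in H0. iexp. lra.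
  - pose proof (Var _ (Clp 0 ltac:(lra))). pose proof (Var _ (Clp 2 ltac:(lra))).
    assert (ip q q = d * d) by (rewrite <- nrm_sq; unfold q; rewrite Dpe; ring).
    replace x with (hadd X q p) by (unfold q, hsub; veq; ring).
    unfold hsub in *. iexp_in H. iexp_in H0. iexp. nra.
Qed.
End Sep.


Lemma poly_lim A B C : (forall t, 0 < t <= 1 -> A + t * B + t * t * C <= 0) -> A <= 0.
Proof.
  intro Hp. apply Rnot_lt_le. intro HA.
  set (M := Rabs B + Rabs C + 1).
  assert (HM : 0 < M) by (unfold M; pose proof (Rabs_pos B); pose proof (Rabs_pos C); lra).
  set (t := Rmin 1 (A / (2 * M))).
  assert (0 < A / (2*M)) by (apply Rdiv_lt_0_compat; lra).
  assert (0 < t) by (apply Rmin_pos; lra).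
  assert (t <= 1) by apply Rmin_l.
  assert (t <= A / (2*M)) by apply Rmin_r.
  specialize (Hp t ltac:(lra)).
  assert (- Rabs B <= B) by (pose proof (Rle_abs (-B)) as Q; rewrite Rabs_Ropp in Q; lra).
  assert (- Rabs C <= C) by (pose proof (Rle_abs (-C)) as Q; rewrite Rabs_Ropp in Q; lra).
  assert (t * B >= - t * Rabs B) by nra.
  assert (t * t * C >= - t * t * Rabs C) by nra.
  assert (t * t <= t) by nra. assert (t * t * Rabs C <= t * Rabs C) by (apply Rmult_le_compat_r; [apply Rabs_pos|lra]).
  assert (t * M <= A / 2).
  { apply Rle_trans with (A / (2*M) * M). apply Rmult_le_compat_r; lra. right; field; lra. }
  unfold M in *. nra.
Qed.

Section Qri.
Variable X : HilbertSpace.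
Notation nrm := (hnorm X).
Notation E := (HOps X).

Lemma cone_gen_iff C x v : cone_gen E C x v <-> exists t a, 0 <= t /\ C a /\ v = hscal X t (hsub X a x).
Proof. reflexivity. Qed.
Lemma closure_iff A x : closure E A x <-> forall eps, 0 < eps -> exists y, A y /\ nrm (hsub X x y) < eps.
Proof. reflexivity. Qed.

Lemma subspace_ext (S1 S2 : X -> Prop) : (forall v, S1 v <-> S2 v) -> is_linear_subspace E S1 -> is_linear_subspace E S2.
Proof.
  intros Hiff [H0 [Ha Hs]]. split; [|split].
  - apply Hiff. exact H0.
  - intros x y Hx Hy. apply Hiff. apply Ha; apply Hiff; auto.
  - intros t x Hx. apply Hiff. apply Hs; apply Hiff; auto.
Qed.

Lemma closure_ext (S1 S2 : X -> Prop) : (forall v, S1 v <-> S2 v) -> forall v, closure E S1 v <-> closure E S2 v.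
Proof.
  intros Hiff v. rewrite !closure_iff. split; intros Hc eps He; destruct (Hc eps He) as [y [Hy Hy2]];
  exists y; split; auto; apply Hiff; auto.
Qed.

Lemma closure_mono (S1 S2 : X -> Prop) : (forall v, S1 v -> S2 v) -> forall v, closure E S1 v -> closure E S2 v.
Proof.
  intros Hs v. rewrite !closure_iff. intros Hc eps He; destruct (Hc eps He) as [y [Hy Hy2]].
  exists y; split; auto.
Qed.

Lemma closure_incl (S : X -> Prop) v : S v -> closure E S v.
Proof.
  intro Hv. apply closure_iff. intros eps He. exists v. split; auto.
  unfold hsub. rewrite hadd_opp, nrm_zero. lra.
Qed.

Lemma closure_idem (S : X -> Prop) v : closure E (closure E S) v -> closure E S v.
Proof.
  rewrite !closure_iff. intros Hc eps He. destruct (Hc (eps/2)) as [y [Hy Hy2]]; [lra|].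
  rewrite closure_iff in Hy. destruct (Hy (eps/2)) as [w [Hw Hw2]]; [lra|].
  exists w. split; auto. pose proof (nrm_tri X v y w). lra.
Qed.

Lemma qri_segment C x0 y t : is_convex E C -> qri E C x0 -> C y -> 0 < t <= 1 ->
  qri E C (hadd X (hscal X t x0) (hscal X (1 - t) y)).
Proof.
  intros Cv [Cx0 Lsub] Cy Ht.
  set (xt := hadd X (hscal X t x0) (hscal X (1 - t) y)).
  set (L := closure E (cone_gen E C x0)).
  assert (Cxt : C xt) by (apply (Cv x0 y t); auto; lra).
  split; auto.
  destruct Lsub as [L0 [Ladd Lscal]].
  assert (Inc1 : forall v, cone_gen E C x0 v -> cone_gen E C xt v).
  { intros v Hv. rewrite cone_gen_iff in *. destruct Hv as [s [a [Hs [Ca ->]]]].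
    exists (s / t), (hadd X (hscal X t a) (hscal X (1 - t) y)). split.
    unfold Rdiv; apply Rmult_le_pos; [lra|left; apply Rinv_0_lt_compat; lra]. split. apply (Cv a y t); auto; lra.
    unfold xt, hsub. veq. field. lra. }
  assert (Inc2 : forall v, cone_gen E C xt v -> L v).
  { intros v Hv. rewrite cone_gen_iff in Hv. destruct Hv as [s [a [Hs [Ca ->]]]].
    assert (La : L (hsub X a x0)).
    { apply closure_incl. apply cone_gen_iff. exists 1, a. split; [lra|split; auto]. rewrite hscal_1; auto. }
    assert (Ly : L (hsub X y x0)).
    { apply closure_incl. apply cone_gen_iff. exists 1, y. split; [lra|split; auto]. rewrite hscal_1; auto. }
    replace (hscal X s (hsub X a xt)) with
      (hadd X (hscal X s (hsub X a x0)) (hscal X (s * (1 - t)) (hscal X (-1) (hsub X y x0)))).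
    apply Ladd; apply Lscal; auto. apply Lscal; auto.
    unfold xt, hsub. veq. ring. }
  apply (subspace_ext L). 2: { split; [|split]; auto. }
  intro v. split.
  - intro Hv. apply (closure_mono _ _ Inc1). exact Hv.
  - intro Hv. apply closure_idem. apply (closure_mono _ _ Inc2). exact Hv.
Qed.

Lemma qri_scale C x s : is_cone E C -> qri E C x -> 0 < s -> qri E C (hscal X s x).
Proof.
  intros Cc [Cx Lsub] Hs. split. apply Cc; auto; lra.
  apply (subspace_ext (closure E (cone_gen E C x))); auto.
  apply closure_ext. intro v. rewrite !cone_gen_iff. split.
  - intros [t [a [Ht [Ca ->]]]]. exists (t / s), (hscal X s a). split. unfold Rdiv; apply Rmult_le_pos; [lra|left; apply Rinv_0_lt_compat; lra].
    split. apply Cc; auto; lra. unfold hsub. veq. field. lra.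
  - intros [t [a [Ht [Ca ->]]]]. exists (t * s), (hscal X (/s) a). split. nra.
    split. apply Cc; auto. left; apply Rinv_0_lt_compat; lra. unfold hsub. veq. field. lra.
Qed.
End Qri.


Section PartA.
Variable H : HilbertSpace.
Notation nrm := (hnorm H).

Lemma polar_cone (T : H * H -> Prop) : is_cone (PairOps H) (polar H T).
Proof.
  intros t [a b] Ht Hp h z HT. simpl. rewrite !hinner_scall. specialize (Hp h z HT). simpl in Hp. nra.
Qed.

Lemma polar_convex (T : H * H -> Prop) : is_convex (PairOps H) (polar H T).
Proof.
  intros [a b] [c d] t Hp Hq Ht h z HT. simpl. iexp.
  specialize (Hp h z HT). specialize (Hq h z HT). simpl in *. nra.
Qed.

Lemma projz_cone (N : H * H -> Prop) : is_cone (PairOps H) N -> is_cone (HOps H) (Proj_z H N).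
Proof.
  intros Nc t z Ht [h Hh]. exists (hscal H t h). apply (Nc t (h, z)); auto.
Qed.

Lemma qri_projz (N : H * H -> Prop) p : qri (PairOps H) N p -> qri (HOps H) (Proj_z H N) (snd p).
Proof.
  intros [Np Ksub].
  change (is_linear_subspace (HOps (HPair H)) (closure (HOps (HPair H)) (cone_gen (HOps (HPair H)) N p))) in Ksub.
  split. { exists (fst p). destruct p; exact Np. }
  set (Q := cone_gen (HOps H) (Proj_z H N) (snd p)).
  set (K := closure (HOps (HPair H)) (cone_gen (HOps (HPair H)) N p)).
  assert (F1 : forall k, K k -> closure (HOps H) Q (snd k)).
  { intros k Hk. unfold K in Hk. rewrite closure_iff in Hk. apply closure_iff. intros eps He.
    destruct (Hk eps He) as [k' [Ck' Hk']]. rewrite cone_gen_iff in Ck'. destruct Ck' as [tau [a [Ht [Na ->]]]].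
    exists (hscal H tau (hsub H (snd a) (snd p))). split.
    - apply cone_gen_iff. exists tau, (snd a). split; auto. split; auto. exists (fst a). destruct a; exact Na.
    - eapply Rle_lt_trans; [|exact Hk']. destruct k as [k1 k2]. apply (pair_nrm_snd H (hsub H k1 _)). }
  assert (F2 : forall w, closure (HOps H) Q w -> forall eps, 0 < eps -> exists k, K k /\ nrm (hsub H w (snd k)) < eps).
  { intros w Hw eps He. rewrite closure_iff in Hw. destruct (Hw eps He) as [y [Qy Hy]].
    unfold Q in Qy. rewrite cone_gen_iff in Qy. destruct Qy as [tau [a [Ht [[b Nb] ->]]]].
    exists (hscal (HPair H) tau (hsub (HPair H) (b, a) p)). split.
    - apply closure_incl. apply cone_gen_iff. exists tau, (b, a). auto.
    - exact Hy. }
  split; [|split].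
  - apply closure_incl. unfold Q. apply cone_gen_iff. exists 0, (snd p). split; [lra|split].
    exists (fst p); destruct p; exact Np. veq. ring.
  - intros w1 w2 H1 H2. apply closure_iff. intros eps He.
    destruct (F2 w1 H1 (eps/3)) as [k1 [K1 N1]]; [lra|]. destruct (F2 w2 H2 (eps/3)) as [k2 [K2 N2]]; [lra|].
    destruct Ksub as [_ [Kadd _]].
    pose proof (F1 _ (Kadd k1 k2 K1 K2)) as Hc. rewrite closure_iff in Hc.
    destruct (Hc (eps/3)) as [y [Qy Hy]]; [lra|]. exists y. split; auto.
    simpl in Hy |- *.
    pose proof (nrm_tri H (hadd H w1 w2) (hadd H (snd k1) (snd k2)) y).
    replace (hsub H (hadd H w1 w2) (hadd H (snd k1) (snd k2))) with
      (hadd H (hsub H w1 (snd k1)) (hsub H w2 (snd k2))) in H0 by (unfold hsub; veq; ring).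
    pose proof (nrm_add H (hsub H w1 (snd k1)) (hsub H w2 (snd k2))). unfold hsub in *. lra.
  - intros t w Hw. apply closure_iff. intros eps He.
    destruct (F2 w Hw (eps / (2 * (Rabs t + 1)))) as [k [Kk Nk]].
    { apply Rdiv_lt_0_compat; [lra|]. pose proof (Rabs_pos t); lra. }
    destruct Ksub as [_ [_ Kscal]].
    pose proof (F1 _ (Kscal t k Kk)) as Hc. rewrite closure_iff in Hc.
    destruct (Hc (eps/2)) as [y [Qy Hy]]; [lra|]. exists y. split; auto.
    simpl in Hy |- *.
    pose proof (nrm_tri H (hscal H t w) (hscal H t (snd k)) y).
    replace (hsub H (hscal H t w) (hscal H t (snd k))) with (hscal H t (hsub H w (snd k))) in H0 by (unfold hsub; veq; ring).
    rewrite nrm_scal in H0.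
    assert (Rabs t * nrm (hsub H w (snd k)) <= (Rabs t + 1) * (eps / (2 * (Rabs t + 1)))).
    { pose proof (Rabs_pos t). pose proof (nrm_pos H (hsub H w (snd k))). nra. }
    replace ((Rabs t + 1) * (eps / (2 * (Rabs t + 1)))) with (eps/2) in H1 by (field; pose proof (Rabs_pos t); lra).
    unfold hsub in *. lra.
Qed.

Lemma ii_to_i (T : H * H -> Prop) :
  let N := @polar H T in
  (exists p, qri (PairOps H) N p) ->
  (forall z, qri (HOps H) (@Proj_z H N) z -> sqri (HOps H) (@Proj_h H T) z) ->
  (exists beta1, 0 < beta1 /\
      forall h, unit_sphere H h -> sqri (HOps H) (@Proj_h H T) h ->
        exists z, T (h, z) /\ beta1 <= hinner H h z) ->
  exists beta, 0 < beta /\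
      forall h z, N (h, z) -> hnorm H z = 1 -> hinner H h z <= - beta.
Proof.
  intros N [p0 Hp0] Hinc [b1 [Hb1 Hii]]. exists b1. split; auto.
  intros h z Nhz Hz.
  destruct p0 as [h0 z0].
  assert (Key : forall t, 0 < t <= 1 ->
    hinner H (hadd H (hscal H t h0) (hscal H (1 - t) h)) (hadd H (hscal H t z0) (hscal H (1 - t) z))
    + b1 * hinner H (hadd H (hscal H t z0) (hscal H (1 - t) z)) (hadd H (hscal H t z0) (hscal H (1 - t) z)) <= 0).
  { intros t Ht.
    set (ht := hadd H (hscal H t h0) (hscal H (1 - t) h)).
    set (zt := hadd H (hscal H t z0) (hscal H (1 - t) z)).
    assert (Qt : qri (PairOps H) N (ht, zt)).
    { apply (qri_segment (HPair H) N (h0, z0) (h, z) t); auto. apply polar_convex. }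
    assert (Nt : N (ht, zt)) by apply Qt.
    pose proof (qri_projz N _ Qt) as Qz. simpl in Qz.
    destruct (Req_dec (hinner H zt zt) 0) as [E0|E0].
    { assert (zt = hzero H) by (apply hinner_def; auto). rewrite H0, hinner_zeror, hinner_zerol. lra. }
    set (s := nrm zt).
    assert (Hs : 0 < s).
    { unfold s. pose proof (nrm_pos H zt) as P1. pose proof (nrm_sq H zt) as P2.
      destruct (Req_dec (hnorm H zt) 0) as [e|e]; [exfalso; apply E0; rewrite <- P2, e; ring | lra]. }
    assert (Qu : qri (HOps H) (Proj_z H N) (hscal H (/s) zt)).
    { apply qri_scale; auto. apply projz_cone. apply polar_cone. apply Rinv_0_lt_compat; auto. }
    assert (Us : unit_sphere H (hscal H (/s) zt)).
    { unfold unit_sphere. rewrite nrm_scal_pos. fold s. field. lra. left; apply Rinv_0_lt_compat; auto. }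
    destruct (Hii _ Us (Hinc _ Qu)) as [w [Tw Hw]].
    assert (Nsc : N (hscal H (/s) ht, hscal H (/s) zt)).
    { apply (polar_cone T (/s) (ht, zt)); auto. left; apply Rinv_0_lt_compat; auto. }
    specialize (Nsc _ _ Tw). simpl in Nsc. rewrite hinner_scall, hinner_scalr in Nsc.
    assert (Ss : s * s = hinner H zt zt) by apply nrm_sq.
    assert (hinner H ht zt <= - b1 * (s * s)).
    { assert (/ s * (/ s * hinner H ht zt) <= - b1) by lra.
      apply Rmult_le_reg_l with (/s * /s). apply Rmult_lt_0_compat; apply Rinv_0_lt_compat; auto.
      replace (/ s * / s * (- b1 * (s * s))) with (- b1) by (field; lra). lra. }
    rewrite <- Ss. lra. }
  set (A := hinner H h z + b1 * hinner H z z).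
  set (B := hinner H h0 z + hinner H h z0 - 2 * hinner H h z + b1 * (hinner H z0 z + hinner H z z0 - 2 * hinner H z z)).
  set (Cc := hinner H h0 z0 - hinner H h0 z - hinner H h z0 + hinner H h z + b1 * (hinner H z0 z0 - hinner H z0 z - hinner H z z0 + hinner H z z)).
  assert (A <= 0).
  { apply (poly_lim A B Cc). intros t Ht. specialize (Key t Ht). iexp_in Key.
    unfold A, B, Cc. lra. }
  assert (hinner H z z = 1) by (rewrite <- nrm_sq, Hz; ring).
  unfold A in *. rewrite H1 in H0. lra.
Qed.
End PartA.


Section PartB.
Variable H : HilbertSpace.
Variable T : H * H -> Prop.
Hypothesis T_closed : is_closed (PairOps H) T.
Hypothesis T_convex : is_convex (PairOps H) T.
Hypothesis T_cone : is_cone (PairOps H) T.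
Notation nrm := (hnorm H).

Lemma INR_S_pos n : 0 < INR (S n).
Proof. apply lt_0_INR. lia. Qed.

Lemma ru_main (L : H -> Prop) h zh :
  T (h, zh) -> is_closed (HOps H) L -> L (hzero H) ->
  (forall a b, L a -> L b -> L (hadd H a b)) -> (forall t a, L a -> L (hscal H t a)) ->
  (forall w z, T (w, z) -> L w) -> L h ->
  (forall v, L v -> exists s d zd, 0 <= s /\ T (d, zd) /\ v = hscal H s (hsub H d h)) ->
  exists r m, 0 < r /\ 0 <= m /\ forall u, L u -> nrm u < r -> exists z, T (hadd H h u, z) /\ nrm z <= m.
Proof.
  intros Th Lcl L0 Ladd Lscal DL Lh Core.
  set (Nn := fun n : nat => INR (S n)).
  set (Ex := fun n v => exists z, T (hadd H h (hscal H (/ Nn n) v), z) /\ nrm z <= Nn n).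
  set (Good := fun n v => forall eps, 0 < eps -> exists w z, T (w, z) /\ nrm z <= Nn n /\
        nrm (hsub H (hadd H h (hscal H (/ Nn n) v)) w) < eps).
  assert (ExG : forall n v, Ex n v -> Good n v).
  { intros n v [z [Tz Hz]] eps He. exists (hadd H h (hscal H (/ Nn n) v)), z. split; auto. split; auto.
    unfold hsub. rewrite hadd_opp, nrm_zero. auto. }
  assert (Cov : forall v, L v -> exists n, Ex n v).
  { intros v Lv. destruct (Core v Lv) as [s [d [zd [Hs [Td ->]]]]].
    destruct (INR_archimed 1 (s + 1 + nrm zh + nrm zd)) as [n Hn]; [lra|].
    exists n. unfold Ex.
    assert (HN : INR n <= Nn n) by (unfold Nn; rewrite S_INR; lra).
    pose proof (nrm_pos H zh); pose proof (nrm_pos H zd).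
    assert (HN0 : 0 < Nn n) by (unfold Nn; apply INR_S_pos).
    set (a := s / Nn n).
    assert (Ha0 : 0 <= a) by (unfold a; unfold Rdiv; apply Rmult_le_pos; [lra|left; apply Rinv_0_lt_compat; lra]).
    assert (Ha1 : a <= 1).
    { unfold a. apply Rmult_le_reg_r with (Nn n); auto. unfold Rdiv. rewrite Rmult_assoc, Rinv_l; lra. }
    exists (hadd H (hscal H (1 - a) zh) (hscal H a zd)). split.
    - replace (hadd H h (hscal H (/ Nn n) (hscal H s (hsub H d h)))) with (hadd H (hscal H (1 - a) h) (hscal H a d)).
      apply T_comb; auto; lra. unfold a, hsub; veq. field. lra.
    - eapply Rle_trans. apply nrm_add. rewrite !nrm_scal_pos by lra. nra. }
  assert (Op : forall n v, ~ Good n v -> exists d, 0 < d /\ forall v', nrm (hsub H v v') < d -> ~ Good n v').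
  { intros n v Hg.
    assert (HN0 : 0 < Nn n) by (unfold Nn; apply INR_S_pos).
    assert (exists eps0, 0 < eps0 /\ forall w z, T (w, z) -> nrm z <= Nn n ->
               eps0 <= nrm (hsub H (hadd H h (hscal H (/ Nn n) v)) w)) as [e0 [He0 Hw]].
    { apply NNPP. intro Hc. apply Hg. intros eps He. apply NNPP. intro Hn. apply Hc. exists eps. split; auto.
      intros w z Tw Hz. apply Rnot_lt_le. intro. apply Hn. exists w, z. auto. }
    exists (e0 * Nn n / 2). split. apply Rmult_lt_0_compat; [nra|lra].
    intros v' Hv' Gv'. destruct (Gv' (e0/2)) as [w [z [Tw [Hz Hwz]]]]; [lra|].
    specialize (Hw w z Tw Hz).
    pose proof (nrm_tri H (hadd H h (hscal H (/ Nn n) v)) (hadd H h (hscal H (/ Nn n) v')) w).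
    replace (hsub H (hadd H h (hscal H (/ Nn n) v)) (hadd H h (hscal H (/ Nn n) v'))) with
      (hscal H (/ Nn n) (hsub H v v')) in H0 by (unfold hsub; veq; ring).
    rewrite nrm_scal_pos in H0 by (left; apply Rinv_0_lt_compat; lra).
    assert (/ Nn n * nrm (hsub H v v') < e0 / 2).
    { apply Rmult_lt_reg_l with (Nn n); auto. rewrite <- Rmult_assoc, Rinv_r by lra. lra. }
    lra. }
  destruct (baire H L Good Lcl L0 Op (fun v Lv => let (n, E) := Cov v Lv in ex_intro _ n (ExG n v E)))
    as [n [c [rho [Lc [Hrho Hball]]]]].
  assert (Lmc : L (hscal H (-1) c)) by auto.
  destruct (Cov _ Lmc) as [k [z1 [Tz1 Hz1]]].
  set (a := Nn n). set (b := Nn k).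
  assert (Ha : 0 < a) by (unfold a, Nn; apply INR_S_pos).
  assert (Hb : 0 < b) by (unfold b, Nn; apply INR_S_pos).
  assert (Star : forall u, L u -> nrm u < rho / (a + b) -> forall eps, 0 < eps -> exists w z, T (w, z) /\
          nrm z <= a + b /\ nrm (hsub H (hadd H h u) w) < eps).
  { intros u Lu Hu eps He.
    set (v := hadd H c (hscal H (a + b) u)).
    assert (Lv : L v) by (unfold v; auto).
    assert (Hvc : nrm (hsub H v c) < rho).
    { replace (hsub H v c) with (hscal H (a + b) u) by (unfold v, hsub; veq; ring).
      rewrite nrm_scal_pos by lra.
      apply Rmult_lt_reg_l with (/(a+b)). apply Rinv_0_lt_compat; lra.
      rewrite <- Rmult_assoc, Rinv_l, Rmult_1_l by lra. replace (/ (a+b) * rho) with (rho / (a+b)) by (field; lra). auto. }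
    destruct (Hball v Lv Hvc eps He) as [w0 [z0 [Tw0 [Hz0 Hw0]]]].
    set (lam := a / (a + b)).
    assert (Hl0 : 0 <= lam) by (unfold lam; unfold Rdiv; apply Rmult_le_pos; [lra|left; apply Rinv_0_lt_compat; lra]).
    assert (Hl1 : lam <= 1).
    { unfold lam. apply Rmult_le_reg_r with (a + b). lra. unfold Rdiv. rewrite Rmult_assoc, Rinv_l; lra. }
    exists (hadd H (hscal H lam w0) (hscal H (1 - lam) (hadd H h (hscal H (/ Nn k) (hscal H (-1) c))))),
      (hadd H (hscal H lam z0) (hscal H (1 - lam) z1)).
    split. apply T_comb; auto; lra. split.
    - eapply Rle_trans. apply nrm_add. rewrite !nrm_scal_pos by lra.
      assert (Q1 : nrm z0 <= a) by exact Hz0. assert (Q2 : nrm z1 <= b) by exact Hz1.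
      pose proof (nrm_pos H z0). pose proof (nrm_pos H z1).
      assert (lam * nrm z0 <= 1 * a) by (apply Rmult_le_compat; lra).
      assert ((1 - lam) * nrm z1 <= 1 * b) by (apply Rmult_le_compat; lra). lra.
    - replace (hsub H (hadd H h u) (hadd H (hscal H lam w0) (hscal H (1 - lam) (hadd H h (hscal H (/ Nn k) (hscal H (-1) c))))))
        with (hscal H lam (hsub H (hadd H h (hscal H (/ Nn n) v)) w0)).
      rewrite nrm_scal_pos by lra. pose proof (nrm_pos H (hsub H (hadd H h (hscal H (/ Nn n) v)) w0)).
      assert (lam * nrm (hsub H (hadd H h (hscal H (/ Nn n) v)) w0) <= 1 * nrm (hsub H (hadd H h (hscal H (/ Nn n) v)) w0)) by (apply Rmult_le_compat_r; lra). lra.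
      unfold v, lam, hsub. fold a b. veq. field. lra. }
  exists (rho / (a + b) / 2), (a + b + 1). split. apply Rdiv_lt_0_compat; [apply Rdiv_lt_0_compat|]; lra.
  split. lra. intros u Lu Hu.
  apply (ru_iter H T T_closed T_convex L h (rho / (a+b)) (a + b)); auto.
  apply Rdiv_lt_0_compat; lra. lra.
Qed.
End PartB.


Section PartB2.
Variable H : HilbertSpace.
Variable T : H * H -> Prop.
Hypothesis T_closed : is_closed (PairOps H) T.
Hypothesis T_convex : is_convex (PairOps H) T.
Hypothesis T_cone : is_cone (PairOps H) T.
Notation nrm := (hnorm H).

Lemma i_to_ii :
  (exists beta, 0 < beta /\ forall h z, polar H T (h, z) -> hnorm H z = 1 -> hinner H h z <= - beta) ->
  exists beta1, 0 < beta1 /\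
      forall h, unit_sphere H h -> sqri (HOps H) (Proj_h H T) h ->
        exists z, T (h, z) /\ beta1 <= hinner H h z.
Proof.
  intros [beta [Hb Hi]]. exists (beta / 2). split; [lra|]. intros h Hh1 [Dh [Lsub Lcl]].
  unfold unit_sphere in Hh1.
  set (L := cone_gen (HOps H) (Proj_h H T) h) in *.
  destruct Dh as [zh Th].
  assert (T00 : T (hzero H, hzero H)) by (apply T_zero; auto; exists (h, zh); auto).
  destruct Lsub as [L0 [Ladd Lscal]].
  assert (L0' : L (hzero H)) by exact L0.
  assert (Ladd' : forall a b, L a -> L b -> L (hadd H a b)) by exact Ladd.
  assert (Lscal' : forall t a, L a -> L (hscal H t a)) by exact Lscal.
  clear L0 Ladd Lscal.
  assert (DL : forall w z, T (w, z) -> L w).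
  { intros w z Tw. unfold L. apply cone_gen_iff. exists 1, (hadd H w h). split; [lra|split].
    exists (hadd H z zh). apply T_add; auto. unfold hsub; veq; ring. }
  assert (Lh : L h).
  { assert (L (hscal H 1 (hsub H (hzero H) h))).
    { unfold L. apply cone_gen_iff. exists 1, (hzero H). split; [lra|split]; auto. exists (hzero H); auto. }
    replace h with (hscal H (-1) (hscal H 1 (hsub H (hzero H) h))) by (unfold hsub; veq; ring). auto. }
  assert (Core : forall v, L v -> exists s d zd, 0 <= s /\ T (d, zd) /\ v = hscal H s (hsub H d h)).
  { intros v Lv. unfold L in Lv. rewrite cone_gen_iff in Lv. destruct Lv as [s [d [Hs [[zd Td] ->]]]].
    exists s, d, zd. auto. }
  destruct (ru_main H T T_closed T_convex L h zh Th Lcl L0' Ladd' Lscal' DL Lh Core)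
    as [r [m [Hr [Hm RU]]]].
  apply NNPP. intro Hno.
  assert (Hno' : forall z, T (h, z) -> hinner H h z < beta / 2).
  { intros z Tz. apply Rnot_le_lt. intro. apply Hno. exists z. auto. }
  set (sig := 3 * beta / 4).
  set (K := fun q : HPair H => exists w z s, T (w, z) /\ s <= hinner H h z /\ q = (w, hscal H s h)).
  set (x := (h, hscal H sig h) : HPair H).
  assert (Kw : forall w z, T (w, z) -> K (w, hscal H (hinner H h z) h)).
  { intros w z Tw. exists w, z, (hinner H h z). split; auto. split; auto. lra. }
  destruct (separate (HPair H) K x) as [[a b] [Hq1 Hq2]].
  - exists (hzero H), (hzero H), 0. split; auto. split. rewrite hinner_zeror; lra.
    simpl. f_equal. veq. ring.
  - intros q1 q2 [w1 [z1 [s1 [T1 [S1 ->]]]]] [w2 [z2 [s2 [T2 [S2 ->]]]]].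
    exists (hadd H w1 w2), (hadd H z1 z2), (s1 + s2). split. apply T_add; auto.
    split. rewrite hinner_addr; lra. simpl. f_equal. veq. ring.
  - intros t q Ht [w [z [s [Tw [Sw ->]]]]].
    exists (hscal H t w), (hscal H t z), (t * s). split. apply T_scal; auto.
    split. rewrite hinner_scalr; nra. simpl. f_equal. veq. ring.
  - set (eta := beta / (8 * (m + 2 + beta))).
    assert (Heta : 0 < eta) by (unfold eta; apply Rdiv_lt_0_compat; lra).
    assert (Heta1 : eta * (m + 2 + beta) = beta / 8) by (unfold eta; field; lra).
    assert (Heta2 : eta < 1).
    { assert (eta * (m + 2 + beta) < 1 * (m + 2 + beta)) by lra.
      apply Rmult_lt_reg_r with (m + 2 + beta); lra. }
    set (delta := Rmin (beta / 8) (eta * r / 2)).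
    assert (Hd0 : 0 < delta) by (apply Rmin_pos; nra).
    assert (Hd1 : delta <= beta / 8) by apply Rmin_l.
    assert (Hd2 : delta <= eta * r / 2) by apply Rmin_r.
    exists delta. split; auto.
    intros k [w [z [s [Tw [Sw ->]]]]]. apply Rnot_lt_le. intro Hlt.
    change (hnorm (HPair H) (hsub H h w, hsub H (hscal H sig h) (hscal H s h)) < delta) in Hlt.
    pose proof (pair_nrm_fst H (hsub H h w) (hsub H (hscal H sig h) (hscal H s h))) as P1.
    pose proof (pair_nrm_snd H (hsub H h w) (hsub H (hscal H sig h) (hscal H s h))) as P2.
    assert (E2 : hsub H (hscal H sig h) (hscal H s h) = hscal H (sig - s) h) by (unfold hsub; veq; ring).
    rewrite E2 in P1, P2, Hlt. pose proof (nrm_scal H (sig - s) h) as P3.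
    rewrite Hh1 in P3.
    assert (Hs : sig - delta < s) by (pose proof (Rle_abs (sig - s)); lra).
    set (lam := 1 - eta).
    set (u := hscal H (lam / eta) (hsub H h w)).
    assert (Lu : L u).
    { unfold u, hsub. apply Lscal'. apply Ladd'; auto.
      replace (hopp H w) with (hscal H (-1) w) by (veq; ring). apply Lscal'. eapply DL; eauto. }
    assert (Hu : nrm u < r).
    { unfold u. rewrite nrm_scal_pos by (unfold lam; unfold Rdiv; apply Rmult_le_pos; [lra|left; apply Rinv_0_lt_compat; lra]).
      assert (lam / eta * nrm (hsub H h w) <= / eta * nrm (hsub H h w)).
      { apply Rmult_le_compat_r. apply nrm_pos. unfold lam, Rdiv.
        assert (0 < / eta) by (apply Rinv_0_lt_compat; lra). nra. }
      assert (/ eta * nrm (hsub H h w) < r / 2).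
      { apply Rmult_lt_reg_l with eta; auto. rewrite <- Rmult_assoc, Rinv_r, Rmult_1_l by lra. nra. }
      lra. }
    destruct (RU u Lu Hu) as [zu [Tu Hzu]].
    pose proof (T_comb H T T_convex lam eta w z (hadd H h u) zu ltac:(unfold lam; lra) ltac:(lra) ltac:(unfold lam; lra) Tw Tu) as Tc.
    replace (hadd H (hscal H lam w) (hscal H eta (hadd H h u))) with h in Tc
      by (unfold u, lam, hsub; veq; field; lra).
    specialize (Hno' _ Tc). rewrite hinner_addr, !hinner_scalr in Hno'.
    pose proof (CS_abs H h zu) as Cz. rewrite Hh1 in Cz.
    pose proof (Rle_abs (- hinner H h zu)) as Az. rewrite Rabs_Ropp in Az.
    assert (lam * (sig - delta) <= lam * hinner H h z) by (apply Rmult_le_compat_l; unfold lam; lra).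
    assert (eta * (- m) <= eta * hinner H h zu) by (apply Rmult_le_compat_l; lra).
    assert (sig <= beta) by (unfold sig; lra).
    assert (eta * (sig + m) <= beta / 8) by nra.
    assert (0 <= eta * delta) by nra.
    unfold lam in *. unfold sig in *. nra.
  - set (c := hinner H b h).
    simpl in Hq2. rewrite hinner_scalr in Hq2. fold c in Hq2.
    assert (Hc0 : 0 <= c).
    { assert (Km : K (hzero H, hscal H (-1) h)).
      { exists (hzero H), (hzero H), (-1). split; auto. split; auto. rewrite hinner_zeror; lra. }
      specialize (Hq1 _ Km). simpl in Hq1. rewrite hinner_zeror, hinner_scalr in Hq1. fold c in Hq1. lra. }
    assert (Hc : 0 < c).
    { destruct Hc0 as [|Hc0]; auto. exfalso.
      specialize (Hq1 _ (Kw h zh Th)). simpl in Hq1. rewrite hinner_scalr in Hq1. fold c in Hq1.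
      rewrite <- Hc0 in *. nra. }
    assert (Np : polar H T (hscal H (/ c) a, h)).
    { intros w z Tw. simpl. rewrite hinner_scall.
      specialize (Hq1 _ (Kw w z Tw)). simpl in Hq1. rewrite hinner_scalr in Hq1. fold c in Hq1.
      apply Rmult_le_reg_l with c; auto.
      replace (c * (/ c * hinner H a w + hinner H h z)) with (hinner H a w + hinner H h z * c) by (field; lra). lra. }
    specialize (Hi _ _ Np Hh1). rewrite hinner_scall in Hi.
    assert (hinner H a h <= - beta * c).
    { apply Rmult_le_reg_l with (/c). apply Rinv_0_lt_compat; auto.
      replace (/ c * (- beta * c)) with (- beta) by (field; lra). lra. }
    rewrite (hinner_sym H a h) in *.
    unfold sig in Hq2. nra.
Qed.
End PartB2.

Theorem proposition4p3 (H : HilbertSpace) (T : H * H -> Prop)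
  (T_closed : is_closed (PairOps H) T)
  (T_convex : is_convex (PairOps H) T)
  (T_cone : is_cone (PairOps H) T) :
  let N := @polar H T in
  let cond_i := exists beta, 0 < beta /\
      forall h z, N (h, z) -> hnorm H z = 1 -> hinner H h z <= - beta in
  let cond_ii := exists beta1, 0 < beta1 /\
      forall h, unit_sphere H h -> sqri (HOps H) (@Proj_h H T) h ->
        exists z, T (h, z) /\ beta1 <= hinner H h z in
  (cond_i -> cond_ii) /\
  ((exists p, qri (PairOps H) N p) ->
   (forall z, qri (HOps H) (@Proj_z H N) z -> sqri (HOps H) (@Proj_h H T) z) ->
   cond_ii -> cond_i).
Proof.
  intros N cond_i cond_ii. split.
  - apply i_to_ii; auto.
  - apply ii_to_i.
Qed.
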